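(* There exist absolute constants $c>0$ and $\rho>0$ such that for every even $k\ge2$ and every $p\in\Delta([k]\times[k])$ with marginals $p_1,p_2$, if $S_1,S_2$ are independent uniformly random subsets of $[k]$ of cardinality $k/2$, then $$\Pr\Big[\big|p(S_1\times S_2)-p_1(S_1)p_2(S_2)\big|\ge c\,\frac{d_{TV}(p,p_1\otimes p_2)}{k}\Big]\ge\rho .$$
   Context: $\Delta([k]\times[k])$ is the set of probability distributions on $[k]\times[k]$; $p_1(x)=\sum_y p(x,y)$, $p_2(y)=\sum_x p(x,y)$; $(p_1\otimes p_2)(x,y)=p_1(x)p_2(y)$; $d_{TV}(p,q)=\frac12\|p-q\|_1$; for a set $A$, $p(A)=\sum_{a\in A}p(a)$. *)

(* Defs.v *)
From HB Require Import structures.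
From mathcomp Require Import all_boot all_order all_algebra.
Set Implicit Arguments. Unset Strict Implicit. Unset Printing Implicit Defensive.
Import Order.TTheory GRing.Theory Num.Theory.
Local Open Scope ring_scope.

Definition is_dist (R : realFieldType) (k : nat) (p : {ffun 'I_k * 'I_k -> R}) : Prop :=
  (forall a, 0 <= p a) /\ \sum_a p a = 1.

Definition marg1 (R : realFieldType) (k : nat) (p : {ffun 'I_k * 'I_k -> R}) (x : 'I_k) : R :=
  \sum_(y : 'I_k) p (x, y).
Definition marg2 (R : realFieldType) (k : nat) (p : {ffun 'I_k * 'I_k -> R}) (y : 'I_k) : R :=
  \sum_(x : 'I_k) p (x, y).

Definition prod_dist (R : realFieldType) (k : nat) (p : {ffun 'I_k * 'I_k -> R}) (a : 'I_k * 'I_k) : R :=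
  marg1 p a.1 * marg2 p a.2.

Definition dTV (R : realFieldType) (k : nat) (p q : 'I_k * 'I_k -> R) : R :=
  2^-1 * \sum_a `|p a - q a|.

Definition mass (R : realFieldType) (T : finType) (f : T -> R) (A : {set T}) : R :=
  \sum_(a in A) f a.

Definition half_subsets (k : nat) : {set {set 'I_k}} :=
  [set S : {set 'I_k} | #|S| == k./2].

Definition prob_half_pair (R : realFieldType) (k : nat)
    (E : {set 'I_k} -> {set 'I_k} -> bool) : R :=
  (#|[set S : {set 'I_k} * {set 'I_k} |
       [&& S.1 \in half_subsets k, S.2 \in half_subsets k & E S.1 S.2]]|)%:R
  / ((#|half_subsets k| ^ 2)%N)%:R.

(* Main.v *)
Require Import Defs.
From HB Require Import structures.
From mathcomp Require Import all_boot all_order all_algebra all_fingroup.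
From mathcomp Require Import ring lra zify.
From Stdlib Require Import Lia.
Import Order.TTheory GRing.Theory Num.Theory.
Local Open Scope ring_scope.
Set Implicit Arguments. Unset Strict Implicit. Unset Printing Implicit Defensive.

Section P1.
Variable R : realFieldType.

Lemma CS (I : finType) (P : pred I) (f g : I -> R) :
  (\sum_(i | P i) f i * g i) ^+ 2 <=
  (\sum_(i | P i) f i ^+ 2) * (\sum_(i | P i) g i ^+ 2).
Proof.
have H : 0 <= \sum_(i | P i) \sum_(j | P j) (f i * g j - f j * g i) ^+ 2.
  by apply: sumr_ge0 => i _; apply: sumr_ge0 => j _; apply: sqr_ge0.
have E : \sum_(i | P i) \sum_(j | P j) (f i * g j - f j * g i) ^+ 2 =
   \sum_(i | P i) \sum_(j | P j) (f i ^+ 2 * g j ^+ 2)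
 + \sum_(i | P i) \sum_(j | P j) (g i ^+ 2 * f j ^+ 2)
 - 2 * \sum_(i | P i) \sum_(j | P j) ((f i * g i) * (f j * g j)).
  rewrite -big_split mulr_sumr -sumrB /=; apply: eq_bigr => i _.
  rewrite -big_split mulr_sumr -sumrB /=; apply: eq_bigr => j _; ring.
rewrite E -!big_distrlr /= in H.
rewrite expr2; lra.
Qed.

Definition sg (b : bool) : R := if b then 1 else -1.
Lemma sg2 b : sg b * sg b = 1. Proof. by case: b; rewrite /sg ?mulrNN mulr1. Qed.

Definition flip (I : finType) (a : I) (e : {ffun I -> bool}) : {ffun I -> bool} :=
  [ffun t => (t == a) (+) e t].

Lemma flipK (I : finType) (a : I) : involutive (flip a).
Proof. by move=> e; apply/ffunP => t; rewrite !ffunE addbA addbb. Qed.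

Lemma sum_flip0 (I : finType) (a : I) (F : {ffun I -> bool} -> R) :
  (forall e, F (flip a e) = - F e) -> \sum_e F e = 0.
Proof.
move=> HF.
have : \sum_e F e = \sum_e F (flip a e).
  by rewrite (reindex_inj (inv_inj (@flipK I a))).
under [in X in _ = X -> _]eq_bigr do rewrite HF.
rewrite sumrN => h; lra.
Qed.

Lemma sg_flip (I : finType) (a t : I) e :
  sg (flip a e t) = if t == a then - sg (e t) else sg (e t).
Proof. by rewrite ffunE; case: (t == a); case: (e t); rewrite /sg ?opprK. Qed.

Definition NF (I : finType) : R := (#|{ffun I -> bool}|)%:R.

Lemma sum_sg2 (I : finType) (a b : I) :
  \sum_(e : {ffun I -> bool}) sg (e a) * sg (e b) = if a == b then NF I else 0.
Proof.
case: eqP => [->|ne].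
  under eq_bigr do rewrite sg2. by rewrite sumr_const /NF.
apply: (@sum_flip0 _ a (fun e => sg (e a) * sg (e b))) => e /=; rewrite !sg_flip eqxx.
have /negbTE -> : b != a by apply/eqP => h; apply: ne.
by rewrite mulNr.
Qed.

Definition h4 (I : eqType) (a b c d : I) : R :=
  if a == b then (if c == d then 1 else 0)
  else if a == c then (if b == d then 1 else 0)
  else if a == d then (if b == c then 1 else 0) else 0.

Lemma sum_sg4 (I : finType) (a b c d : I) :
  \sum_(e : {ffun I -> bool}) sg (e a) * sg (e b) * sg (e c) * sg (e d)
  = NF I * h4 a b c d.
Proof.
rewrite /h4; case: eqP => [<-|nab].
  under eq_bigr do rewrite sg2 mul1r.
  by rewrite sum_sg2; case: (c == d); rewrite ?mulr1 ?mulr0.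
case: eqP => [<-|nac].
  rewrite (eq_bigr (fun e : {ffun I -> bool} => sg (e b) * sg (e d))); last first.
    by move=> e _; move: (sg2 (e a)) => h; rewrite -[RHS]mul1r -h; ring.
  by rewrite sum_sg2; case: (b == d); rewrite ?mulr1 ?mulr0.
case: eqP => [<-|nad].
  rewrite (eq_bigr (fun e : {ffun I -> bool} => sg (e b) * sg (e c))); last first.
    by move=> e _; move: (sg2 (e a)) => h; rewrite -[RHS]mul1r -h; ring.
  by rewrite sum_sg2; case: (b == c); rewrite ?mulr1 ?mulr0.
rewrite mulr0; apply: (@sum_flip0 _ a (fun e => sg (e a) * sg (e b) * sg (e c) * sg (e d))) => e /=; rewrite !sg_flip eqxx.
have /negbTE -> : b != a by apply/eqP => h; apply: nab.
have /negbTE -> : c != a by apply/eqP => h; apply: nac.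
have /negbTE -> : d != a by apply/eqP => h; apply: nad.
by rewrite !mulNr.
Qed.


Lemma sq_sum (I : finType) (P : pred I) (x : I -> R) :
  (\sum_(i | P i) x i) ^+ 2 = \sum_(a | P a) \sum_(b | P b) x a * x b.
Proof. by rewrite expr2 big_distrlr. Qed.

Definition dl (I : eqType) (x y : I) : R := if x == y then 1 else 0.

Lemma sum_dl (I : finType) (c : I) (F : I -> R) : \sum_d F d * dl c d = F c.
Proof.
rewrite (bigD1 c) //= /dl eqxx mulr1 big1 ?addr0 // => d nd.
by rewrite eq_sym (negbTE nd) mulr0.
Qed.

Lemma inner4 (I : finType) (G : I -> I -> R) (a b : I) :
  \sum_c \sum_d G c d * h4 a b c d =
  if a == b then \sum_c G c c else G a b + G b a.
Proof.
rewrite /h4; case: (eqVneq a b) => [eab|nab].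
  subst b.
  apply: eq_bigr => c _; rewrite -[RHS](sum_dl c (G c)).
  by apply: eq_bigr => d _; rewrite /dl.
rewrite (bigD1 a) //= eqxx -[G a b](sum_dl b (G a)); congr (_ + _).
rewrite (bigD1 b) /=; last by rewrite eq_sym.
rewrite (negbTE nab) eqxx.
rewrite [X in X + _](_ : _ = G b a); last first.
  rewrite -[RHS](sum_dl a (G b)); apply: eq_bigr => d _; by rewrite /dl.
rewrite [X in _ + X]big1 ?addr0 // => c /andP [nca ncb].
have /negbTE -> : a != c by rewrite eq_sym.
apply: big1 => d _.
by rewrite (eq_sym b c) (negbTE ncb) if_same mulr0.
Qed.

Lemma vec4 (I J : finType) (W : I -> J -> R) :
  \sum_(e : {ffun I -> bool}) (\sum_j (\sum_i sg (e i) * W i j) ^+ 2) ^+ 2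
  <= 3 * NF I * (\sum_i \sum_j W i j ^+ 2) ^+ 2.
Proof.
pose G a b := \sum_j W a j * W b j.
have S1 : forall e : {ffun I -> bool}, \sum_j (\sum_i sg (e i) * W i j) ^+ 2
    = \sum_a \sum_b sg (e a) * sg (e b) * G a b.
  move=> e; under eq_bigr do rewrite sq_sum.
  rewrite exchange_big; apply: eq_bigr => a _; rewrite exchange_big.
  apply: eq_bigr => b _; rewrite /G mulr_sumr; apply: eq_bigr => j _; ring.
have E1 : \sum_(e : {ffun I -> bool}) (\sum_j (\sum_i sg (e i) * W i j) ^+ 2) ^+ 2
   = \sum_a \sum_b \sum_c \sum_d G a b * G c d * (NF I * h4 a b c d).
  transitivity (\sum_(e : {ffun I -> bool}) \sum_a \sum_b \sum_c \sum_d
      G a b * G c d * (sg (e a) * sg (e b) * sg (e c) * sg (e d))).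
    apply: eq_bigr => e _; rewrite S1 expr2 big_distrlr; apply: eq_bigr => a _.
    under eq_bigr do rewrite big_distrlr.
    rewrite exchange_big; apply: eq_bigr => b _; apply: eq_bigr => c _.
    apply: eq_bigr => d _; rewrite /=; ring.
  rewrite exchange_big; apply: eq_bigr => a _; rewrite exchange_big.
  apply: eq_bigr => b _; rewrite exchange_big; apply: eq_bigr => c _.
  rewrite exchange_big; apply: eq_bigr => d _; rewrite -mulr_sumr sum_sg4 //.
rewrite E1.
have E2 : \sum_a \sum_b \sum_c \sum_d G a b * G c d * (NF I * h4 a b c d)
   = NF I * \sum_a \sum_b G a b * (if a == b then \sum_c G c c else G a b + G b a).
  rewrite mulr_sumr; apply: eq_bigr => a _; rewrite mulr_sumr; apply: eq_bigr => b _.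
  rewrite -inner4 mulr_sumr mulr_sumr; apply: eq_bigr => c _.
  rewrite mulr_sumr mulr_sumr; apply: eq_bigr => d _; ring.
rewrite E2.
have HA : \sum_i \sum_j W i j ^+ 2 = \sum_a G a a.
  by apply: eq_bigr => a _; apply: eq_bigr => j _; rewrite expr2.
rewrite HA; set A := \sum_a G a a.
have Gsym : forall a b, G b a = G a b.
  by move=> a b; apply: eq_bigr => j _; rewrite mulrC.
have Gpos : forall a, 0 <= G a a.
  by move=> a; apply: sumr_ge0 => j _; rewrite -expr2 sqr_ge0.
have Gcs : forall a b, G a b ^+ 2 <= G a a * G b b.
  have GE : forall a, G a a = \sum_j W a j ^+ 2.
    by move=> a; apply: eq_bigr => j _; rewrite expr2.
  by move=> a b; rewrite !GE; exact: (CS predT (W a) (W b)).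
have B : \sum_a \sum_b G a b * (if a == b then A else G a b + G b a)
   <= \sum_a \sum_b ((if a == b then G a a * A else 0) + 2 * (G a a * G b b)).
  apply: ler_sum => a _; apply: ler_sum => b _.
  case: (eqVneq a b) => [<-|nab].
    have := Gpos a; nra.
  rewrite (Gsym a b) add0r; have := Gcs a b; rewrite expr2; lra.
have C : \sum_a \sum_b ((if a == b then G a a * A else 0) + 2 * (G a a * G b b))
    = 3 * A ^+ 2.
  have C1 : forall a, \sum_b (if a == b then G a a * A else 0) = G a a * A.
    move=> a; rewrite (bigD1 a) //= eqxx big1 ?addr0 // => b nb.
    by rewrite eq_sym (negbTE nb).
  under eq_bigr do rewrite big_split /= C1.
  rewrite big_split /= -mulr_suml.
  under [X in _ + X = _]eq_bigr do under eq_bigr do rewrite mulrA.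
  rewrite -big_distrlr /= -mulr_sumr -/A; ring.
have NFp : 0 <= NF I by rewrite /NF ler0n.
rewrite [3 * _]mulrC -mulrA; apply: ler_wpM2l => //; rewrite -C; exact: B.
Qed.

Lemma lin4 (J : finType) (y : J -> R) :
  \sum_(f : {ffun J -> bool}) (\sum_j sg (f j) * y j) ^+ 4
  <= 3 * NF J * (\sum_j y j ^+ 2) ^+ 2.
Proof.
have := vec4 (fun (j : J) (_ : 'I_1) => y j).
under eq_bigr do rewrite big_ord1.
under [X in _ <= _ * X ^+ 2 -> _]eq_bigr do rewrite big_ord1.
move=> h; apply: le_trans h; apply: ler_sum => f _; by rewrite -exprM.
Qed.

Lemma chaos4 (I J : finType) (Q : I -> J -> R) :
  \sum_(e : {ffun I -> bool}) \sum_(f : {ffun J -> bool})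
     (\sum_i \sum_j sg (e i) * sg (f j) * Q i j) ^+ 4
  <= 9 * NF I * NF J * (\sum_i \sum_j Q i j ^+ 2) ^+ 2.
Proof.
have E : forall (e : {ffun I -> bool}) (f : {ffun J -> bool}),
   \sum_i \sum_j sg (e i) * sg (f j) * Q i j
   = \sum_j sg (f j) * (\sum_i sg (e i) * Q i j).
  move=> e f; rewrite exchange_big; apply: eq_bigr => j _.
  rewrite mulr_sumr; apply: eq_bigr => i _; ring.
under eq_bigr do under eq_bigr do rewrite E.
apply: (le_trans (y := \sum_(e : {ffun I -> bool}) 3 * NF J *
    (\sum_j (\sum_i sg (e i) * Q i j) ^+ 2) ^+ 2)).
  by apply: ler_sum => e _; exact: lin4.
rewrite -mulr_sumr.
have := vec4 Q.
have NFp : 0 <= 3 * NF J by rewrite mulr_ge0 // /NF ler0n.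
move/(ler_wpM2l NFp).
suff -> : 9 * NF I * NF J * (\sum_i \sum_j Q i j ^+ 2) ^+ 2
   = 3 * NF J * (3 * NF I * (\sum_i \sum_j Q i j ^+ 2) ^+ 2) by [].
ring.
Qed.
End P1.

Section P2.
Variable T : finType.

Definition mapto (A B : {set T}) (x : T) := nth x (enum B) (index x (enum A)).

Lemma mapto_in (A B : {set T}) x : #|A| = #|B| -> x \in A -> mapto A B x \in B.
Proof.
move=> hAB xA; rewrite -mem_enum /mapto; apply: mem_nth.
by rewrite -cardE -hAB cardE index_mem mem_enum.
Qed.

Lemma mapto_inj (A B : {set T}) x y : #|A| = #|B| -> x \in A -> y \in A ->
  mapto A B x = mapto A B y -> x = y.
Proof.
move=> hAB xA yA.
have ix : (index x (enum A) < size (enum B))%N by rewrite -cardE -hAB cardE index_mem mem_enum.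
have iy : (index y (enum A) < size (enum B))%N by rewrite -cardE -hAB cardE index_mem mem_enum.
rewrite /mapto (set_nth_default y x ix) => /eqP.
rewrite nth_uniq ?enum_uniq // => /eqP e.
by rewrite -(nth_index x (s := enum A) (x := x)) ?mem_enum // e nth_index ?mem_enum.
Qed.

Lemma perm_trans (A B : {set T}) : #|A| = #|B| -> exists s : {perm T}, s @: A = B.
Proof.
move=> hAB.
have hC : #|~: A| = #|~: B|.
  by have := cardsC A; have := cardsC B; lia.
pose f x := if x \in A then mapto A B x else mapto (~: A) (~: B) x.
have finj : injective f.
  move=> x y; rewrite /f.
  case xA: (x \in A); case yA: (y \in A).
  - exact: mapto_inj.
  - move=> e; have := mapto_in hAB xA; rewrite e.
    have : y \in ~: A by rewrite inE yA.
    by move=> /(mapto_in hC); rewrite inE => /negbTE ->.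
  - move=> e; have := mapto_in hAB yA; rewrite -e.
    have : x \in ~: A by rewrite inE xA.
    by move=> /(mapto_in hC); rewrite inE => /negbTE ->.
  - by apply: mapto_inj; rewrite // inE ?xA ?yA.
exists (perm finj); apply/eqP; rewrite eqEcard card_imset ?hAB ?leqnn ?andbT; last exact: perm_inj.
apply/subsetP => _ /imsetP [x xA ->]; rewrite permE /f xA; exact: mapto_in.
Qed.

Variable R : realFieldType.

Lemma sum_perm_half (n : nat) (G : {set T} -> R) (A : {set T}) :
  #|A| = n ->
  (#|[set S : {set T} | #|S| == n]|)%:R * \sum_(s : {perm T}) G (s @: A)
  = (#|{perm T}|)%:R * \sum_(S in [set S : {set T} | #|S| == n]) G S.
Proof.
move=> hA; set H := [set S : {set T} | #|S| == n].
have inv : forall (s : {perm T}) (S : {set T}), (s @: S \in H) = (S \in H).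
  by move=> s S; rewrite !inE card_imset //; exact: perm_inj.
have E1 : forall s : {perm T}, \sum_(S in H) G (s @: S) = \sum_(S in H) G S.
  move=> s; rewrite [RHS](reindex_inj (imset_inj (@perm_inj _ s))) /=.
  by apply: eq_bigl => S; rewrite inv.
have E2 : forall S : {set T}, S \in H -> \sum_(s : {perm T}) G (s @: S) = \sum_(s : {perm T}) G (s @: A).
  move=> S; rewrite inE => /eqP hS.
  have [t ht] : exists t : {perm T}, t @: A = S by apply: perm_trans; rewrite hS hA.
  rewrite -ht; transitivity (\sum_(s : {perm T}) G ((t * s)%g @: A)).
    apply: eq_bigr => s _; congr G; rewrite -imset_comp; apply: eq_imset => x.
    by rewrite /= permM.
  by rewrite [RHS](reindex_inj (mulgI t)).
transitivity (\sum_(S in H) \sum_(s : {perm T}) G (s @: S)).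
  by rewrite (eq_bigr _ E2) sumr_const mulr_natl.
rewrite exchange_big /= (eq_bigr _ (fun s _ => E1 s)) sumr_const mulr_natl.
by [].
Qed.
End P2.
Section P3.
Variable R : realFieldType.
Variable T : finType.
Variable n : nat.
Hypothesis hT : #|T| = (n + n)%N.
Hypothesis hn : (0 < n)%N.
Local Notation H := [set S : {set T} | #|S| == n].

Definition Ind (S : {set T}) x : R := (x \in S)%:R.
Definition Nc x x' : R := \sum_(S in H) Ind S x * Ind S x'.

Lemma Nc_perm (s : {perm T}) x x' : Nc (s x) (s x') = Nc x x'.
Proof.
rewrite /Nc [LHS](reindex_inj (imset_inj (@perm_inj _ s))) /=.
apply: eq_big => [S|S _].
  by rewrite !inE card_imset //; exact: perm_inj.
by rewrite /Ind !mem_imset //; exact: perm_inj.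
Qed.

Lemma Nc_sym x x' : Nc x x' = Nc x' x.
Proof. by apply: eq_bigr => S _; rewrite mulrC. Qed.

Lemma Nc_diag x y : Nc x x = Nc y y.
Proof.
have [s hs] : exists s : {perm T}, s @: [set x] = [set y].
  by apply: perm_trans; rewrite !cards1.
rewrite imset_set1 in hs; move/set1_inj: hs => <-.
by rewrite Nc_perm.
Qed.

Lemma Nc_off x x' y y' : x != x' -> y != y' -> Nc x x' = Nc y y'.
Proof.
move=> nx ny.
have [s hs] : exists s : {perm T}, s @: [set x; x'] = [set y; y'].
  by apply: perm_trans; rewrite !cards2 nx ny.
rewrite imsetU1 imset_set1 in hs.
have sx : s x \in [set y; y'] by rewrite -hs !inE eqxx.
have sx' : s x' \in [set y; y'] by rewrite -hs !inE eqxx orbT.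
have nsx : s x != s x' by rewrite (inj_eq (@perm_inj _ s)).
rewrite -(Nc_perm s); move: sx sx' nsx; rewrite !inE.
case/orP => /eqP -> ; case/orP => /eqP ->; rewrite ?eqxx //.
by move=> _; rewrite Nc_sym.
Qed.

Lemma Ind2 S x : Ind S x * Ind S x = Ind S x.
Proof. by rewrite /Ind; case: (x \in S); rewrite ?mulr1 ?mulr0. Qed.

Lemma sumInd S : \sum_x Ind S x = #|S|%:R.
Proof.
rewrite (eq_bigr (fun x => if x \in S then 1 else 0)); last by move=> x _; rewrite /Ind; case: (x \in S).
by rewrite -big_mkcond sumr_const.
Qed.

Lemma sum_diag : \sum_x Nc x x = n%:R * #|H|%:R.
Proof.
rewrite /Nc exchange_big /=.
rewrite (eq_bigr (fun _ => n%:R)); first by rewrite sumr_const mulr_natr.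
move=> S; rewrite inE => /eqP hS.
by under eq_bigr do rewrite Ind2; rewrite sumInd hS.
Qed.

Lemma sum_row x : \sum_x' Nc x x' = n%:R * Nc x x.
Proof.
rewrite /Nc exchange_big /= mulr_sumr; apply: eq_bigr => S; rewrite inE => /eqP hS.
by rewrite -mulr_sumr sumInd hS Ind2 mulrC.
Qed.


Lemma N_form : exists al be : R,
  (forall x x', Nc x x' = al + (if x == x' then be else 0)) /\ #|H|%:R / 4 <= be.
Proof.
have : (0 < #|T|)%N by rewrite hT; lia.
case/card_gt0P => x0 _.
have : (0 < #|[set~ x0]|)%N by rewrite cardsC1 hT; lia.
case/card_gt0P => x1; rewrite !inE => n10.
have hf : forall x x', Nc x x' = Nc x0 x1 + (if x == x' then Nc x0 x0 - Nc x0 x1 else 0).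
  move=> x x'; case: eqVneq => [->|nxx'].
    by rewrite (Nc_diag x' x0) addrC subrK.
  by rewrite addr0; apply: Nc_off => //; rewrite eq_sym.
exists (Nc x0 x1), (Nc x0 x0 - Nc x0 x1); split => //.
set al := Nc x0 x1; set ga := Nc x0 x0.
have e1 : (n + n)%:R * ga = n%:R * #|H|%:R.
  rewrite -sum_diag (eq_bigr (fun _ => ga)); last by move=> x _; exact: Nc_diag.
  by rewrite sumr_const -hT mulr_natl.
have e2 : (n + n)%:R * al + (ga - al) = n%:R * ga.
  rewrite -sum_row (eq_bigr _ (fun x' _ => hf x0 x')) big_split /= sumr_const -hT.
  have -> : \sum_i (if x0 == i then Nc x0 x0 - Nc x0 x1 else 0) = ga - al.
    rewrite (bigD1 x0) //= eqxx big1 ?addr0 // => x nx.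
    by rewrite eq_sym (negbTE nx).
  by rewrite mulr_natl.
have gpos : 0 <= ga.
  by apply: sumr_ge0 => S _; rewrite Ind2 /Ind ler0n.
have np : 1 <= n%:R :> R by rewrite ler1n.
rewrite natrD in e1 e2.
set h := #|H|%:R in e1 *; set N := n%:R in e1 e2 np *.
have g2 : 2 * ga = h.
  have Np : N != 0 by apply/negP => /eqP z; rewrite z in np; lra.
  by apply: (mulfI Np); rewrite -e1; ring.
nra.
Qed.

Lemma sumInd_in (S : {set T}) (F : T -> R) : \sum_(x in S) F x = \sum_x Ind S x * F x.
Proof.
rewrite big_mkcond; apply: eq_bigr => x _; rewrite /Ind.
by case: (x \in S); rewrite ?mul1r ?mul0r.
Qed.

Lemma swap4 (I : finType) (P : pred I) (A B C D : finType) (F : I -> A -> B -> C -> D -> R) :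
  \sum_(i | P i) \sum_a \sum_b \sum_c \sum_d F i a b c d =
  \sum_a \sum_b \sum_c \sum_d \sum_(i | P i) F i a b c d.
Proof.
rewrite exchange_big; apply: eq_bigr => a _; rewrite exchange_big.
apply: eq_bigr => b _; rewrite exchange_big; apply: eq_bigr => c _.
exact: exchange_big.
Qed.

Lemma second (q : T -> T -> R) (hr : forall x, \sum_y q x y = 0)
   (hc : forall y, \sum_x q x y = 0) :
  (#|H|%:R / 4) ^+ 2 * (\sum_x \sum_y q x y ^+ 2) <=
  \sum_(S in H) \sum_(S' in H) (\sum_(x in S) \sum_(y in S') q x y) ^+ 2.
Proof.
have [al [be [hN hb]]] := N_form.
have E1 : forall S S' : {set T}, (\sum_(x in S) \sum_(y in S') q x y) ^+ 2 =
   \sum_x \sum_x' \sum_y \sum_y' (Ind S x * Ind S x') * (Ind S' y * Ind S' y') * (q x y * q x' y').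
  move=> S S'; rewrite sumInd_in sq_sum; apply: eq_bigr => x _; apply: eq_bigr => x' _.
  rewrite !sumInd_in.
  transitivity (Ind S x * Ind S x' * ((\sum_y Ind S' y * q x y) * (\sum_y' Ind S' y' * q x' y'))).
    ring.
  rewrite big_distrlr mulr_sumr; apply: eq_bigr => y _.
  rewrite mulr_sumr; apply: eq_bigr => y' _; rewrite /=; ring.
have E2 : \sum_(S in H) \sum_(S' in H) (\sum_(x in S) \sum_(y in S') q x y) ^+ 2 =
   \sum_x \sum_x' \sum_y \sum_y' Nc x x' * Nc y y' * (q x y * q x' y').
  under eq_bigr do under eq_bigr do rewrite E1.
  under eq_bigr do rewrite swap4.
  rewrite swap4; apply: eq_bigr => x _; apply: eq_bigr => x' _.
  apply: eq_bigr => y _; apply: eq_bigr => y' _.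
  rewrite /Nc mulr_suml mulr_suml; apply: eq_bigr => S _.
  rewrite mulr_sumr mulr_suml; apply: eq_bigr => S' _; ring.
have E3 : forall x y', \sum_x' Nc x x' * q x' y' = be * q x y'.
  move=> x y'; under eq_bigr do rewrite hN mulrDl.
  rewrite big_split /= -mulr_sumr hc mulr0 add0r.
  rewrite (bigD1 x) //= eqxx big1 ?addr0 // => x' nx.
  by rewrite eq_sym (negbTE nx) mul0r.
have E4 : forall x y, \sum_y' Nc y y' * (be * q x y') = be * (be * q x y).
  move=> x y; under eq_bigr do rewrite hN mulrDl.
  rewrite big_split /= -mulr_sumr -mulr_sumr hr !mulr0 add0r.
  rewrite (bigD1 y) //= eqxx big1 ?addr0 // => y' ny.
  by rewrite eq_sym (negbTE ny) mul0r.
have E5 : \sum_x \sum_x' \sum_y \sum_y' Nc x x' * Nc y y' * (q x y * q x' y')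
   = be ^+ 2 * \sum_x \sum_y q x y ^+ 2.
  rewrite mulr_sumr; apply: eq_bigr => x _.
  rewrite exchange_big mulr_sumr; apply: eq_bigr => y _.
  rewrite exchange_big /=.
  transitivity (\sum_y' Nc y y' * (\sum_x' Nc x x' * q x' y') * q x y).
    apply: eq_bigr => y' _; rewrite mulr_sumr mulr_suml; apply: eq_bigr => x' _; ring.
  under eq_bigr do rewrite E3.
  by rewrite -mulr_suml E4; ring.
rewrite E2 E5.
have hF : 0 <= \sum_x \sum_y q x y ^+ 2.
  by apply: sumr_ge0 => x _; apply: sumr_ge0 => y _; apply: sqr_ge0.
apply: ler_wpM2r => //.
have h0 : 0 <= #|H|%:R / 4 :> R by rewrite divr_ge0 ?ler0n.
have := le_trans h0 hb; move: h0 hb; set u := #|_|%:R / 4; rewrite !expr2; nra.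
Qed.
End P3.

Section P4.
Variable R : realFieldType.
Variable T : finType.
Variable n : nat.
Hypothesis hT : #|T| = (n + n)%N.
Hypothesis hn : (0 < n)%N.
Local Notation H := [set S : {set T} | #|S| == n].
Local Notation U := ('I_n * bool)%type.

Lemma cardE2 : #|{: U}| = #|T|.
Proof. by rewrite card_prod card_ord card_bool hT muln2 addnn. Qed.

Definition phi (u : U) : T := enum_val (cast_ord cardE2 (enum_rank u)).

Lemma phi_inj : injective phi.
Proof. by move=> u v /enum_val_inj /cast_ord_inj /enum_rank_inj. Qed.

Lemma sum_phi (F : T -> R) : \sum_u F (phi u) = \sum_x F x.
Proof.
have -> : \sum_x F x = \sum_(x in phi @: [set: U]) F x.
  apply: eq_bigl => x; have -> : phi @: [set: U] = [set: T].
    apply/eqP; rewrite eqEcard subsetT card_imset; last exact: phi_inj.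
    by rewrite !cardsT /= -cardE2.
  by rewrite inE.
rewrite big_imset /=; last exact: (in2W phi_inj).
by apply: eq_bigl => u; rewrite inE.
Qed.

Definition Se (e : {ffun 'I_n -> bool}) : {set T} := [set phi (i, e i) | i : 'I_n].

Lemma card_Se e : #|Se e| = n.
Proof.
rewrite card_imset ?card_ord // => i j /phi_inj [] //.
Qed.

Lemma sum_in_Se (s : {perm T}) e (F : T -> R) :
  \sum_(x in s @: Se e) F x = \sum_i F (s (phi (i, e i))).
Proof.
rewrite -imset_comp big_imset /=.
  by apply: eq_bigl => i; rewrite inE.
by move=> i j _ _ /perm_inj /phi_inj [].
Qed.


Definition Qu (I J : finType) (u : I -> bool -> J -> bool -> R) i j :=
  \sum_b \sum_b' sg R b * sg R b' * u i b j b'.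

Lemma quarter (I J : finType) (u : I -> bool -> J -> bool -> R)
  (hr : forall i b, \sum_j \sum_b' u i b j b' = 0)
  (hc : forall j b', \sum_i \sum_b u i b j b' = 0)
  (e : {ffun I -> bool}) (f : {ffun J -> bool}) :
  \sum_i \sum_j u i (e i) j (f j) =
  4^-1 * \sum_i \sum_j sg R (e i) * sg R (f j) * Qu u i j.
Proof.
pose A i j := \sum_b \sum_b' u i b j b'.
pose B i j := \sum_b \sum_b' sg R b * u i b j b'.
pose C i j := \sum_b \sum_b' sg R b' * u i b j b'.
have pt : forall i j, u i (e i) j (f j) = 4^-1 * (A i j + sg R (e i) * B i j
      + sg R (f j) * C i j + sg R (e i) * sg R (f j) * Qu u i j).
  move=> i j; rewrite /A /B /C /Qu !big_bool /=.
  by case: (e i); case: (f j); rewrite /sg /=; field.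
transitivity (\sum_i \sum_j 4^-1 * A i j + \sum_i \sum_j 4^-1 * (sg R (e i) * B i j)
  + \sum_i \sum_j 4^-1 * (sg R (f j) * C i j)
  + \sum_i \sum_j 4^-1 * (sg R (e i) * sg R (f j) * Qu u i j)).
  rewrite -!big_split; apply: eq_bigr => i _; rewrite -!big_split.
  by apply: eq_bigr => j _; rewrite pt /=; ring.
have hA : \sum_i \sum_j 4^-1 * A i j = 0.
  apply: big1 => i _.
  rewrite -mulr_sumr /A exchange_big /= big1 ?mulr0 // => b _; exact: hr.
have hB : \sum_i \sum_j 4^-1 * (sg R (e i) * B i j) = 0.
  apply: big1 => i _.
  rewrite -mulr_sumr -mulr_sumr /B exchange_big /= big1 ?mulr0 // => b _.
  rewrite (eq_bigr (fun j => sg R b * \sum_b' u i b j b')); last by move=> j _; rewrite mulr_sumr.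
  by rewrite -mulr_sumr hr mulr0.
have hC : \sum_i \sum_j 4^-1 * (sg R (f j) * C i j) = 0.
  rewrite exchange_big; apply: big1 => j _.
  rewrite -mulr_sumr -mulr_sumr /C exchange_big /=.
  under eq_bigr do rewrite exchange_big /=.
  rewrite exchange_big /= big1 ?mulr0 // => b' _.
  under eq_bigr do rewrite -mulr_sumr.
  by rewrite -mulr_sumr exchange_big /= hc mulr0.
rewrite hA hB hC !add0r mulr_sumr; apply: eq_bigr => i _; by rewrite mulr_sumr.
Qed.

Lemma Qu_sq (I J : finType) (u : I -> bool -> J -> bool -> R) i j :
  Qu u i j ^+ 2 <= 4 * \sum_b \sum_b' u i b j b' ^+ 2.
Proof.
rewrite /Qu !big_bool /sg /=.
set a := u i true j true; set b := u i true j false.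
set c := u i false j true; set d := u i false j false.
have := sqr_ge0 (a + b); have := sqr_ge0 (a + c); have := sqr_ge0 (a - d).
have := sqr_ge0 (b - c); have := sqr_ge0 (b + d); have := sqr_ge0 (c + d).
rewrite !expr2; nra.
Qed.

Lemma fourth_fixed (s t : {perm T}) (q : T -> T -> R)
  (hr : forall x, \sum_y q x y = 0) (hc : forall y, \sum_x q x y = 0) :
  \sum_(e : {ffun 'I_n -> bool}) \sum_(f : {ffun 'I_n -> bool})
    (\sum_(x in s @: Se e) \sum_(y in t @: Se f) q x y) ^+ 4
  <= 9 / 16 * NF R 'I_n * NF R 'I_n * (\sum_x \sum_y q x y ^+ 2) ^+ 2.
Proof.
pose u i b j b' := q (s (phi (i, b))) (t (phi (j, b'))).
have hsum : forall (r : {perm T}) (F : T -> R),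
    \sum_i \sum_b F (r (phi (i, b))) = \sum_x F x.
  move=> r F; rewrite pair_big /=.
  rewrite (eq_bigr (fun p => F (r (phi p)))); last by move=> [i b].
  rewrite (sum_phi (fun x => F (r x))).
  by rewrite [RHS](reindex_inj (@perm_inj _ r)).
have hr' : forall i b, \sum_j \sum_b' u i b j b' = 0.
  by move=> i b; rewrite /u (hsum t (fun y => q _ y)) hr.
have hc' : forall j b', \sum_i \sum_b u i b j b' = 0.
  by move=> j b'; rewrite /u (hsum s (fun x => q x _)) hc.
have hX : forall e f, \sum_(x in s @: Se e) \sum_(y in t @: Se f) q x y =
    4^-1 * \sum_i \sum_j sg R (e i) * sg R (f j) * Qu u i j.
  move=> e f; rewrite -quarter // sum_in_Se; apply: eq_bigr => i _.
  by rewrite sum_in_Se.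
have hF : \sum_i \sum_j \sum_b \sum_b' u i b j b' ^+ 2 = \sum_x \sum_y q x y ^+ 2.
  transitivity (\sum_i \sum_b \sum_j \sum_b' u i b j b' ^+ 2).
    by apply: eq_bigr => i _; rewrite exchange_big.
  transitivity (\sum_i \sum_b \sum_y q (s (phi (i, b))) y ^+ 2).
    apply: eq_bigr => i _; apply: eq_bigr => b _.
    exact: (hsum t (fun y => q (s (phi (i, b))) y ^+ 2)).
  exact: (hsum s (fun x => \sum_y q x y ^+ 2)).
have hQ : \sum_i \sum_j Qu u i j ^+ 2 <= 4 * \sum_x \sum_y q x y ^+ 2.
  rewrite -hF mulr_sumr; apply: ler_sum => i _; rewrite mulr_sumr.
  apply: ler_sum => j _; exact: Qu_sq.
have hQ0 : 0 <= \sum_i \sum_j Qu u i j ^+ 2.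
  by apply: sumr_ge0 => i _; apply: sumr_ge0 => j _; apply: sqr_ge0.
under eq_bigr do under eq_bigr do rewrite hX exprMn.
under eq_bigr do rewrite -mulr_sumr.
rewrite -mulr_sumr.
have C4 := chaos4 (Qu u).
have hsq : (\sum_i \sum_j Qu u i j ^+ 2) ^+ 2 <= (4 * \sum_x \sum_y q x y ^+ 2) ^+ 2.
  by rewrite ler_sqr ?nnegrE // (le_trans hQ0 hQ).
set F := \sum_x \sum_y q x y ^+ 2 in hsq *.
set Y := \sum_e \sum_f _ in C4 *.
have NFp : 0 <= NF R 'I_n by rewrite /NF ler0n.
have : Y <= 9 * NF R 'I_n * NF R 'I_n * (4 * F) ^+ 2.
  apply: (le_trans C4); apply: ler_wpM2l => //; rewrite !mulr_ge0 //.
move=> hY; have h4 : 0 <= 4^-1 ^+ 4 :> R by rewrite exprn_ge0 // invr_ge0.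
apply: (le_trans (ler_wpM2l h4 hY)).
rewrite le_eqVlt; apply/orP; left; apply/eqP.
by rewrite exprMn; field.
Qed.

Lemma fourth_H (q : T -> T -> R)
  (hr : forall x, \sum_y q x y = 0) (hc : forall y, \sum_x q x y = 0) :
  \sum_(S in H) \sum_(S' in H) (\sum_(x in S) \sum_(y in S') q x y) ^+ 4
  <= 9 / 16 * #|H|%:R ^+ 2 * (\sum_x \sum_y q x y ^+ 2) ^+ 2.
Proof.
pose G2 (S S' : {set T}) := (\sum_(x in S) \sum_(y in S') q x y) ^+ 4.
set W := \sum_(S in H) \sum_(S' in H) _.
set F := \sum_x \sum_y q x y ^+ 2.
set h := #|H|%:R.
set P := (#|{perm T}|)%:R : R.
set N := NF R 'I_n.
have key : forall e f, h * h * \sum_(s : {perm T}) \sum_(t : {perm T})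
    G2 (s @: Se e) (t @: Se f) = P * P * W.
  move=> e f; rewrite -mulrA mulr_sumr.
  rewrite (eq_bigr (fun s : {perm T} => P * \sum_(S' in H) G2 (s @: Se e) S')); last first.
    by move=> s _; rewrite (sum_perm_half (G2 (s @: Se e))) ?card_Se.
  rewrite -mulr_sumr mulrCA (sum_perm_half (fun S => \sum_(S' in H) G2 S S')) ?card_Se //.
  by rewrite mulrA.
have Pp : 0 < P.
  by rewrite ltr0n; apply/card_gt0P; exists 1%g.
have Np : 0 < N.
  by rewrite /N /NF ltr0n; apply/card_gt0P; exists [ffun => true].
have sumk : \sum_(e : {ffun 'I_n -> bool}) \sum_(f : {ffun 'I_n -> bool})
    h * h * \sum_(s : {perm T}) \sum_(t : {perm T}) G2 (s @: Se e) (t @: Se f)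
    = N * N * (P * P * W).
  rewrite (eq_bigr (fun _ => N * (P * P * W))); last first.
    move=> e _; rewrite (eq_bigr (fun _ => P * P * W)) //.
    by rewrite sumr_const -mulr_natl.
  by rewrite sumr_const -mulr_natl mulrA.
have bnd : \sum_(e : {ffun 'I_n -> bool}) \sum_(f : {ffun 'I_n -> bool})
    h * h * \sum_(s : {perm T}) \sum_(t : {perm T}) G2 (s @: Se e) (t @: Se f)
    <= h * h * (P * P * (9 / 16 * N * N * F ^+ 2)).
  under eq_bigr do rewrite -mulr_sumr.
  rewrite -mulr_sumr; apply: ler_wpM2l; first by rewrite mulr_ge0 ?ler0n.
  pose G' (e f : {ffun 'I_n -> bool}) (s t : {perm T}) := G2 (s @: Se e) (t @: Se f).
  have sw : \sum_(e : {ffun 'I_n -> bool}) \sum_(f : {ffun 'I_n -> bool})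
      \sum_(s : {perm T}) \sum_(t : {perm T}) G' e f s t =
      \sum_(s : {perm T}) \sum_(t : {perm T}) \sum_(e : {ffun 'I_n -> bool})
      \sum_(f : {ffun 'I_n -> bool}) G' e f s t.
    transitivity (\sum_(e : {ffun 'I_n -> bool}) \sum_(s : {perm T})
      \sum_(t : {perm T}) \sum_(f : {ffun 'I_n -> bool}) G' e f s t).
      apply: eq_bigr => e _; rewrite exchange_big; apply: eq_bigr => s _.
      exact: exchange_big.
    rewrite exchange_big; apply: eq_bigr => s _; exact: exchange_big.
  rewrite sw.
  apply: (le_trans (y := \sum_(s : {perm T}) \sum_(t : {perm T}) (9 / 16 * N * N * F ^+ 2))).
    apply: ler_sum => s _; apply: ler_sum => t _; exact: fourth_fixed.
  have hm : forall x : R, x *+ #|{perm T}| = P * x by move=> x; rewrite /P mulr_natl.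
  rewrite !sumr_const !hm; by rewrite mulrA.
rewrite sumk in bnd.
have NP : 0 < N * N * (P * P) by rewrite !mulr_gt0.
rewrite -(ler_pM2l NP).
have -> : N * N * (P * P) * W = N * N * (P * P * W) by ring.
have -> : N * N * (P * P) * (9 / 16 * h ^+ 2 * F ^+ 2) = h * h * (P * P * (9 / 16 * N * N * F ^+ 2)) by ring.
exact: bnd.
Qed.
End P4.

Section P5.
Variable R : realFieldType.

Lemma PZ (I : finType) (A : {set I}) (Z : I -> R) (a : R) :
  (forall i, 0 <= Z i) -> 0 <= a -> #|A|%:R * a <= \sum_(i in A) Z i ->
  (\sum_(i in A) Z i - #|A|%:R * a) ^+ 2 <=
  (\sum_(i in A) Z i ^+ 2) * #|[set i in A | a <= Z i]|%:R.
Proof.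
move=> Zp ap hm.
set B := [set i in A | a <= Z i].
have s1 : \sum_(i in A) Z i <= #|A|%:R * a + \sum_(i in B) Z i * 1.
  have -> : \sum_(i in B) Z i * 1 = \sum_(i in A) (if a <= Z i then Z i else 0).
    rewrite big_mkcond [RHS]big_mkcond; apply: eq_bigr => i _.
    rewrite inE mulr1; by case: (i \in A); case: (a <= Z i).
  rewrite mulr_natl -sumr_const -big_split /=; apply: ler_sum => i _.
  have [h|h] := lerP a (Z i); first by rewrite lerDr.
  by rewrite addr0; apply: ltW.
have s2 := CS (fun i => i \in B) Z (fun _ => 1 : R).
have s3 : \sum_(i in B) Z i ^+ 2 <= \sum_(i in A) Z i ^+ 2.
  rewrite [X in _ <= X](bigID (fun i => a <= Z i)) /=.
  have -> : \sum_(i in B) Z i ^+ 2 = \sum_(i in A | a <= Z i) Z i ^+ 2.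
    by apply: eq_bigl => i; rewrite inE.
  by rewrite ler_wpDr // sumr_ge0 // => i _; apply: sqr_ge0.
have s4 : \sum_(i in B) (1 : R) ^+ 2 = #|B|%:R.
  by rewrite expr1n sumr_const.
rewrite s4 in s2.
set M := \sum_(i in B) Z i * 1 in s1 s2.
have M0 : 0 <= \sum_(i in A) Z i - #|A|%:R * a by rewrite subr_ge0.
have hB : 0 <= #|B|%:R :> R by rewrite ler0n.
apply: (le_trans (y := M ^+ 2)).
  rewrite ler_sqr ?nnegrE //; first lra.
  by apply: le_trans M0 _; lra.
apply: (le_trans s2); apply: ler_wpM2r => //.
Qed.

Variable T : finType.
Variable n : nat.
Hypothesis hT : #|T| = (n + n)%N.
Hypothesis hn : (0 < n)%N.
Local Notation H := [set S : {set T} | #|S| == n].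

Lemma count_bound (q : T -> T -> R)
  (hr : forall x, \sum_y q x y = 0) (hc : forall y, \sum_x q x y = 0) :
  (#|H|%:R : R) ^+ 2 / 256 <=
  #|[set SS in setX H H |
      (\sum_x \sum_y q x y ^+ 2) / 64 <= (\sum_(x in SS.1) \sum_(y in SS.2) q x y) ^+ 2]|%:R.
Proof.
set F := \sum_x \sum_y q x y ^+ 2.
pose Z (SS : {set T} * {set T}) := (\sum_(x in SS.1) \sum_(y in SS.2) q x y) ^+ 2.
have hsplit : forall G : {set T} -> {set T} -> R,
   \sum_(SS in setX H H) G SS.1 SS.2 = \sum_(S in H) \sum_(S' in H) G S S'.
  move=> G; rewrite pair_big_dep /=; apply: eq_bigl => [[S S']].
  by rewrite !inE.
have hcard : #|setX H H|%:R = #|H|%:R ^+ 2 :> R by rewrite cardsX natrM expr2.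
have Zp : forall SS, 0 <= Z SS by move=> SS; apply: sqr_ge0.
have F0 : 0 <= F by apply: sumr_ge0 => x _; apply: sumr_ge0 => y _; apply: sqr_ge0.
set h := (#|H|%:R : R).
have h0 : 0 <= h by rewrite ler0n.
have sec := second hT hn hr hc.
have fou := fourth_H hT hr hc.
rewrite -/F -/h in sec fou.
rewrite -(hsplit (fun S S' => (\sum_(x in S) \sum_(y in S') q x y) ^+ 2)) in sec.
rewrite -(hsplit (fun S S' => (\sum_(x in S) \sum_(y in S') q x y) ^+ 4)) in fou.
have fou' : \sum_(SS in setX H H) Z SS ^+ 2 <= 9 / 16 * h ^+ 2 * F ^+ 2.
  by apply: le_trans fou; rewrite le_eqVlt; apply/orP; left; apply/eqP; apply: eq_bigr => SS _; rewrite -exprM.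
have mean : #|setX H H|%:R * (F / 64) <= \sum_(SS in setX H H) Z SS.
  apply: le_trans sec; rewrite hcard.
  have : 0 <= h ^+ 2 * F by rewrite mulr_ge0 // exprn_ge0.
  move=> hh; lra.
have pz := PZ Zp (divr_ge0 F0 (ler0n _ 64)) mean.
rewrite hcard in pz.
set c := #|[set i in setX H H | F / 64 <= Z i]|%:R in pz *.
have c0 : 0 <= c by rewrite ler0n.
have [Fz|Fpos] := eqVneq F 0.
  have -> : c = h ^+ 2.
    rewrite /c -hcard; congr (_%:R); apply: eq_card => SS.
    by rewrite !inE Fz mul0r Zp andbT.
  have : 0 <= h ^+ 2 by rewrite exprn_ge0.
  move=> ?; lra.
have Fp : 0 < F by rewrite lt0r Fpos F0.
set S2 := \sum_(SS in setX H H) Z SS in pz mean.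
set S4 := \sum_(SS in setX H H) Z SS ^+ 2 in pz fou'.
have hpos : 0 < h.
  rewrite ltr0n; apply/card_gt0P.
  by exists (Se hT [ffun => false]); rewrite inE card_Se.
have d1 : (3 / 64) * h ^+ 2 * F <= S2 - h ^+ 2 * (F / 64).
  have : (h / 4) ^+ 2 * F <= S2 by exact: sec.
  rewrite !expr2 => ?; nra.
have h2 : 0 <= h ^+ 2 := exprn_ge0 2 h0.
have k0 : 0 <= (3 / 64) * h ^+ 2 * F.
  have : 0 <= 3 / 64 :> R by lra.
  by move=> ?; apply: mulr_ge0 => //; apply: mulr_ge0.
have d2 : ((3 / 64) * h ^+ 2 * F) ^+ 2 <= S4 * c.
  apply: le_trans pz; move: k0 d1.
  set X := (3 / 64) * h ^+ 2 * F; set Y := S2 - _; rewrite !expr2 => ? ?; nra.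
have d3 : ((3 / 64) * h ^+ 2 * F) ^+ 2 <= 9 / 16 * h ^+ 2 * F ^+ 2 * c.
  exact: (le_trans d2 (ler_wpM2r c0 fou')).
have hF : 0 < 9 / 16 * h ^+ 2 * F ^+ 2.
  have : 0 < 9 / 16 :> R by lra.
  move=> ?; have := exprn_gt0 2 hpos; have := exprn_gt0 2 Fp.
  by move=> ? ?; apply: mulr_gt0 => //; apply: mulr_gt0.
rewrite -(ler_pM2l hF); apply: le_trans d3; rewrite le_eqVlt; apply/orP; left.
by apply/eqP; field.
Qed.
End P5.

Theorem corollary6p7 :
  exists (c rho : rat), 0 < c /\ 0 < rho /\
  forall (R : realFieldType) (k : nat), (2 <= k)%N -> ~~ odd k ->
  forall p : {ffun 'I_k * 'I_k -> R}, is_dist p ->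
    ratr rho <=
    prob_half_pair R (fun S1 S2 =>
      ratr c * dTV p (prod_dist p) / k%:R <=
      `| mass p (setX S1 S2) - mass (marg1 p) S1 * mass (marg2 p) S2 |).
Proof.
exists (4^-1), (256^-1); split; first by rewrite invr_gt0.
split; first by rewrite invr_gt0.
move=> R k hk hev p [pge psum].
set n := k./2.
have hkn : (n + n)%N = k.
  by rewrite addnn; move: (odd_double_half k); rewrite (negbTE hev) add0n.
have hT : #|'I_k| = (n + n)%N by rewrite card_ord hkn.
have hn : (0 < n)%N by lia.
pose q (x y : 'I_k) := p (x, y) - marg1 p x * marg2 p y.
have tot : \sum_x \sum_y p (x, y) = 1.
  by rewrite pair_big /= -psum; apply: eq_bigr => -[x y].
have sm1 : \sum_x marg1 p x = 1 by exact: tot.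
have sm2 : \sum_y marg2 p y = 1 by rewrite /marg2 exchange_big.
have hr : forall x, \sum_y q x y = 0.
  by move=> x; rewrite sumrB -mulr_sumr sm2 mulr1 subrr.
have hc : forall y, \sum_x q x y = 0.
  by move=> y; rewrite sumrB -mulr_suml sm1 mul1r subrr.
have cb := count_bound hT hn hr hc.
set F := \sum_x \sum_y q x y ^+ 2 in cb.
set H := [set S : {set 'I_k} | #|S| == n] in cb.
have kp : 0 < k%:R :> R by rewrite ltr0n; lia.
have hX : forall S1 S2 : {set 'I_k},
    mass p (setX S1 S2) - mass (marg1 p) S1 * mass (marg2 p) S2 =
    \sum_(x in S1) \sum_(y in S2) q x y.
  move=> S1 S2; rewrite /mass.
  have -> : \sum_(a in setX S1 S2) p a = \sum_(x in S1) \sum_(y in S2) p (x, y).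
    rewrite pair_big_dep /=; apply: eq_big => [[x y]|[x y] _] //.
    by rewrite inE.
  rewrite big_distrlr /= -sumrB; apply: eq_bigr => x _; by rewrite -sumrB.
have hD : dTV p (prod_dist p) = 2^-1 * \sum_x \sum_y `|q x y|.
  rewrite /dTV /prod_dist pair_big /=; congr (_ * _); by apply: eq_bigr => -[x y] _.
have hDF : (\sum_x \sum_y `|q x y|) ^+ 2 <= k%:R ^+ 2 * F.
  have := CS xpredT (fun a : 'I_k * 'I_k => `|q a.1 a.2|) (fun _ => 1 : R).
  have e1 : \sum_(a : 'I_k * 'I_k) `|q a.1 a.2| * 1 = \sum_x \sum_y `|q x y|.
    by rewrite pair_big; apply: eq_bigr => -[x y] _; rewrite mulr1.
  have e2 : \sum_(a : 'I_k * 'I_k) `|q a.1 a.2| ^+ 2 = F.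
    by rewrite /F pair_big; apply: eq_bigr => -[x y] _; rewrite real_normK // num_real.
  have e3 : \sum_(a : 'I_k * 'I_k) (1 : R) ^+ 2 = k%:R ^+ 2.
    by rewrite expr1n sumr_const card_prod card_ord -natrX mulnn.
  by rewrite e1 e2 e3 mulrC.
have D0 : 0 <= \sum_x \sum_y `|q x y|.
  by apply: sumr_ge0 => x _; apply: sumr_ge0 => y _; apply: normr_ge0.
have key : forall S1 S2 : {set 'I_k},
    F / 64 <= (\sum_(x in S1) \sum_(y in S2) q x y) ^+ 2 ->
    ratr (4^-1) * dTV p (prod_dist p) / k%:R <=
    `| mass p (setX S1 S2) - mass (marg1 p) S1 * mass (marg2 p) S2 |.
  move=> S1 S2; rewrite hX hD fmorphV /= ratr_nat.
  set X := \sum_(x in S1) _; set D := \sum_x \sum_y `|q x y| in D0 hDF *.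
  rewrite -(real_normK (num_real X)) => hz.
  set L := 4^-1 * (2^-1 * D) / k%:R.
  have hL : L * (8 * k%:R) = D.
    rewrite /L; field; by rewrite lt0r_neq0.
  have L0 : 0 <= L by rewrite /L !mulr_ge0 // ?invr_ge0 // ltW.
  have N0 := normr_ge0 X.
  have kk : 0 < 64 * k%:R ^+ 2 :> R by rewrite mulr_gt0 // exprn_gt0.
  have h1 : 64 * k%:R ^+ 2 * L ^+ 2 <= 64 * k%:R ^+ 2 * `|X| ^+ 2.
    have -> : 64 * k%:R ^+ 2 * L ^+ 2 = D ^+ 2 by rewrite -hL; ring.
    apply: le_trans hDF _; move: hz kp; set u := `|X| ^+ 2; set kr := k%:R.
    rewrite !expr2 => ? ?; nra.
  rewrite ler_pM2l // in h1.
  move: h1; rewrite !expr2 => ?; nra.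
have sub : [set SS in setX H H | F / 64 <= (\sum_(x in SS.1) \sum_(y in SS.2) q x y) ^+ 2]
  \subset [set S : {set 'I_k} * {set 'I_k} | [&& S.1 \in half_subsets k, S.2 \in half_subsets k &
      ratr (4^-1) * dTV p (prod_dist p) / k%:R <=
      `| mass p (setX S.1 S.2) - mass (marg1 p) S.1 * mass (marg2 p) S.2 |]].
  apply/subsetP => -[S1 S2]; rewrite !inE /= => /andP [/andP [h1 h2] hz].
  by rewrite h1 h2 /=; apply: key.
rewrite /prob_half_pair fmorphV /= ratr_nat natrX.
have hp : 0 < (#|half_subsets k|%:R : R) ^+ 2.
  rewrite exprn_gt0 // ltr0n; apply/card_gt0P.
  by exists (Se hT [ffun => false]); rewrite inE card_Se.
rewrite ler_pdivlMr // mulrC.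
apply: le_trans cb _; rewrite ler_nat.
exact: subset_leq_card.
Qed.
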